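(* Let $\mathbf{S}$ be a distributive meet semilattice and $n\ge1$ an integer. Then the lattice $\mathrm{Fi}_n\mathbf{S}$ of all $n$-filters on $\mathbf{S}$, ordered by inclusion, is a distributive lattice.
   Context: A meet semilattice is distributive if whenever $x\wedge y\le z$ there are $x'\ge x$ and $y'\ge y$ with $x'\wedge y'=z$. For a set $X$, $Y\subseteq_n X$ means $Y$ is a non-empty subset of $X$ with $|Y|\le n$. An $n$-filter on $\mathbf{S}$ is an upset $F$ such that for every non-empty finite $X\subseteq F$: if $\bigwedge Y\in F$ for every $Y\subseteq_n X$ then $\bigwedge X\in F$. In $\mathrm{Fi}_n\mathbf{S}$ meets are intersections and the join of two $n$-filters is the $n$-filter generated by their union. *)

(* Defs.v *)
From HB Require Import structures.
From mathcomp Require Import all_boot all_order.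
Set Implicit Arguments. Unset Strict Implicit. Unset Printing Implicit Defensive.
Import Order.TTheory.
Local Open Scope order_scope.

(* Meet of a non-empty finite list x0 :: s (no top element is assumed). *)
Definition meet_ne {d} {S : meetSemilatticeType d} (x0 : S) (s : seq S) : S :=
  foldr Order.meet x0 s.

Definition distributive_msl {d} (S : meetSemilatticeType d) : Prop :=
  forall x y z : S, x `&` y <= z ->
    exists x' y' : S, x <= x' /\ y <= y' /\ x' `&` y' = z.

Definition upset {d} {S : meetSemilatticeType d} (F : S -> Prop) : Prop :=
  forall x y : S, x <= y -> F x -> F y.

(* Finite subsets are represented by lists; "Y ⊆_n X" : Y non-empty,
   every element of Y in X, and |Y| <= n. *)
Definition nfilter {d} {S : meetSemilatticeType d} (n : nat) (F : S -> Prop) : Prop :=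
  upset F /\
  forall (x0 : S) (s : seq S),
    (forall x, x \in x0 :: s -> F x) ->
    (forall (y0 : S) (t : seq S),
        (forall y, y \in y0 :: t -> y \in x0 :: s) ->
        (size (y0 :: t) <= n)%N ->
        F (meet_ne y0 t)) ->
    F (meet_ne x0 s).

Definition nfilter_gen {d} {S : meetSemilatticeType d} (n : nat) (A : S -> Prop) : S -> Prop :=
  fun x => forall F : S -> Prop, nfilter n F -> (forall y, A y -> F y) -> F x.

Definition nfilter_join {d} {S : meetSemilatticeType d} (n : nat) (G H : S -> Prop) : S -> Prop :=
  nfilter_gen n (fun x => G x \/ H x).

Definition nfilter_meet {d} {S : meetSemilatticeType d} (G H : S -> Prop) : S -> Prop :=
  fun x => G x /\ H x.

(* Main.v *)
Require Import Defs.
From mathcomp Require Import all_boot all_order.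
Import Order.TTheory.

Section Aux.
Local Open Scope order_scope.
Context {d : Order.disp_t} {S : meetSemilatticeType d}.

Lemma meet_ne_le (x0 : S) s x : x \in x0 :: s -> meet_ne x0 s <= x.
Proof.
elim: s x => [|a s IH] x /=; rewrite /meet_ne /=.
  by rewrite inE => /eqP ->.
rewrite !inE => /orP [/eqP ->|/orP [/eqP ->|H]].
- apply: le_trans (IH x0 (mem_head _ _)); exact: leIr.
- exact: leIl.
- apply: le_trans (IH x _); [exact: leIr | by rewrite inE H orbT].
Qed.

Lemma le_meet_ne (z x0 : S) s : (forall x, x \in x0 :: s -> z <= x) -> z <= meet_ne x0 s.
Proof.
elim: s => [|a s IH] H /=; first by apply: H; exact: mem_head.
rewrite /meet_ne /= lexI; apply/andP; split.
  by apply: H; rewrite !inE eqxx orbT.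
apply: IH => x; rewrite inE => /orP [/eqP ->|Hx]; apply: H; rewrite !inE.
  by rewrite eqxx.
by rewrite Hx !orbT.
Qed.

Lemma fin_distr (x0 : S) s z : distributive_msl S -> meet_ne x0 s <= z ->
  exists w0 t, meet_ne w0 t = z /\
    forall w, w \in w0 :: t -> exists2 x, x \in x0 :: s & x <= w.
Proof.
move=> D; elim: s z => [|a s IH] z /= Hz.
  exists z, [::]; split => // w; rewrite inE => /eqP ->; exists x0 => //; exact: mem_head.
have [a' [r' [Ha [Hr E]]]] := D _ _ _ Hz.
have [w0 [t [Et Ht]]] := IH _ Hr.
exists w0, (a' :: t); split; first by rewrite /meet_ne /= -E -Et.
move=> w; rewrite !inE => /orP [/eqP ->|/orP [/eqP ->|Hw]].
- have [x Hx Hxw] := Ht w0 (mem_head _ _).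
  exists x => //; move: Hx; rewrite !inE => /orP [->//|->]; by rewrite !orbT.
- by exists a => //; rewrite !inE eqxx orbT.
- have Hw2 : w \in w0 :: t by rewrite inE Hw orbT.
  have [x Hx Hxw] := Ht w Hw2.
  exists x => //; move: Hx; rewrite !inE => /orP [->//|->]; by rewrite !orbT.
Qed.

Lemma pick_list (X W : seq S) y0 t :
  (forall w, w \in W -> exists2 x, x \in X & x <= w) ->
  (forall y, y \in y0 :: t -> y \in W) ->
  exists z0 u, size u = size t /\ (forall z, z \in z0 :: u -> z \in X) /\
    meet_ne z0 u <= meet_ne y0 t.
Proof.
move=> HW; elim: t => [|a t IH] HY.
  have [x Hx Hxy] := HW y0 (HY _ (mem_head _ _)).
  exists x, [::]; split => //; split => // z; by rewrite inE => /eqP ->.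
have [z0 [u [Su [Zu Mu]]]] : exists z0 u, size u = size t /\
    (forall z, z \in z0 :: u -> z \in X) /\ meet_ne z0 u <= meet_ne y0 t.
  apply: IH => y; rewrite inE => /orP [/eqP ->|Hy]; apply: HY; rewrite !inE.
    by rewrite eqxx.
  by rewrite Hy !orbT.
have Ha2 : a \in y0 :: a :: t by rewrite !inE eqxx orbT.
have [x Hx Hxa] := HW a (HY _ Ha2).
exists z0, (x :: u); split; first by rewrite /= Su.
split; last by rewrite /meet_ne /=; apply: leI2.
move=> z; rewrite !inE => /orP [/eqP ->|/orP [/eqP ->//|Hz]].
  by apply: Zu; exact: mem_head.
by apply: Zu; rewrite inE Hz orbT.
Qed.

Lemma gen_nfilter n (A : S -> Prop) : nfilter n (nfilter_gen n A).
Proof.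
split.
  move=> x y Hxy Hx F HF HA; exact: (proj1 HF) _ _ Hxy (Hx F HF HA).
move=> x0 s HX HY F HF HA; apply: (proj2 HF).
  by move=> x Hx; apply: HX.
by move=> y0 t Ht Hs; apply: HY.
Qed.

End Aux.

Theorem mainTheorem3 (d : Order.disp_t) (S : meetSemilatticeType d) (n : nat) :
  distributive_msl S -> (0 < n)%N ->
  forall F G H : S -> Prop,
    nfilter n F -> nfilter n G -> nfilter n H ->
    forall x : S,
      nfilter_meet F (nfilter_join n G H) x <->
      nfilter_join n (nfilter_meet F G) (nfilter_meet F H) x.
Proof.
move=> D _ F G H HF HG HH x.
set K := nfilter_join n (nfilter_meet F G) (nfilter_meet F H).
have HK : nfilter n K by apply: gen_nfilter.
have KA : forall y, (F y /\ G y) \/ (F y /\ H y) -> K y.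
  by move=> y Hy F' _ HA; apply: HA.
split.
- case=> Fx Jx.
  pose L := fun y : S => forall f z, F f -> (y <= z)%O -> (f <= z)%O -> K z.
  suff: L x by move=> Lx; apply: (Lx x x) => //.
  apply: Jx.
  + split.
      move=> a b Hab La f z Ff Hbz Hfz; apply: (La f z) => //; exact: le_trans Hab Hbz.
    move=> x0 s HX HY f z Ff Hz Hfz.
    have [w0 [t [Et Ht]]] := fin_distr _ _ _ D Hz.
    have zw : forall w, w \in w0 :: t -> (z <= w)%O by move=> w Hw; rewrite -Et; exact: meet_ne_le.
    rewrite -Et; apply: (proj2 HK).
      move=> w Hw; have [y Hy Hyw] := Ht w Hw.
      apply: (HX y Hy f w Ff Hyw); exact: le_trans Hfz (zw w Hw).
    move=> y0 u Hu Hsz.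
    have [z0 [v [Sv [Zv Mv]]]] := pick_list _ _ _ _ Ht Hu.
    apply: (HY z0 v Zv _ f) => //; first by rewrite /= Sv.
    apply: le_meet_ne => y Hy; exact: le_trans Hfz (zw y (Hu y Hy)).
  + move=> y [Gy|Hy] f z Ff Hyz Hfz; apply: KA.
      by left; split; [exact: (proj1 HF) _ _ Hfz Ff | exact: (proj1 HG) _ _ Hyz Gy].
    by right; split; [exact: (proj1 HF) _ _ Hfz Ff | exact: (proj1 HH) _ _ Hyz Hy].
- move=> Kx; split.
    by apply: Kx => // y [[]|[]].
  apply: Kx; first exact: gen_nfilter.
  move=> y [[_ Gy]|[_ Hy]] F' _ HA; apply: HA; by [left|right].
Qed.
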